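(* Let $Q=\sum_{n\ge1}\frac{q_n}{n_\psi!}\partial_\psi^n$ be a $\partial_\psi$-delta operator (so $q_1\ne0$) with $\partial_\psi$-basic polynomial sequence $(p_n)_{n\ge0}$, and let $q(t)=\sum_{n\ge1}\frac{q_n}{n_\psi!}t^n\in F[[t]]$ with compositional inverse $q^{-1}(z)\in F[[z]]$. Then, as formal power series in $z$ with coefficients in $P$, $$\sum_{k\ge0}\frac{p_k(x)}{k_\psi!}z^k=\exp_\psi\{x\,q^{-1}(z)\},\qquad \exp_\psi(u):=\sum_{n\ge0}\frac{u^n}{n_\psi!}.$$
   Context: Let $F$ be a field of characteristic $0$, $P=F[x]$. Fix $(\psi_n)_{n\ge0}$ in $F$ with $\psi_0=1$, $\psi_n\ne0$, $\psi_{-1}=0$; $n_\psi=\psi_{n-1}/\psi_n$, $n_\psi!=1/\psi_n$, $0_\psi!=1$. $\partial_\psi x^n=n_\psi x^{n-1}$ (linear); $E^a(\partial_\psi)=\sum_k\frac{a^k}{k_\psi!}\partial_\psi^k$. A $\partial_\psi$-delta operator is a linear $Q:P\to P$ commuting with all $E^a(\partial_\psi)$, $a\in F$, with $Q(x)$ a nonzero constant. Its $\partial_\psi$-basic sequence: $\deg p_n=n$, $p_0=1$, $p_n(0)=0$ for $n>0$, $Qp_n=n_\psi p_{n-1}$. *)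

(* Defs.v *)
From HB Require Import structures.
From mathcomp Require Import all_boot all_order all_algebra.
Set Implicit Arguments. Unset Strict Implicit. Unset Printing Implicit Defensive.
Import Order.TTheory GRing.Theory Num.Theory.
Local Open Scope ring_scope.

Section PsiCalculus.
Variable F : fieldType.
Variable psi : nat -> F.   (* psi_0 = 1, psi_n <> 0, psi_{-1} = 0 *)

Definition npsi (n : nat) : F := if n is n'.+1 then psi n' / psi n else 0.

Definition nfact (n : nat) : F := (psi n)^-1.

(* the psi-derivative: x^n |-> n_psi x^{n-1}, extended linearly *)
Definition dpsi (p : {poly F}) : {poly F} :=
  \poly_(i < (size p).-1) (npsi i.+1 * p`_i.+1).

(* E^a(d_psi) = sum_k a^k/k_psi! d_psi^k; the sum is finite on each
   polynomial since d_psi^k p = 0 for k >= size p *)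
Definition Epsi (a : F) (p : {poly F}) : {poly F} :=
  \sum_(k < size p) ((a ^+ k) / nfact k) *: iter k dpsi p.

Definition is_psi_delta (Q : {linear {poly F} -> {poly F}}) : Prop :=
  (forall (a : F) (p : {poly F}), Q (Epsi a p) = Epsi a (Q p)) /\
  (exists c : F, c != 0 /\ Q 'X = c%:P).

Definition is_psi_basic (Q : {linear {poly F} -> {poly F}})
  (p : nat -> {poly F}) : Prop :=
  [/\ forall n, size (p n) = n.+1,
      p 0%N = 1,
      forall n, (0 < n)%N -> (p n).[0] = 0 &
      forall n, Q (p n) = npsi n *: p n.-1].

End PsiCalculus.

Section FPS.
Variable F : fieldType.
Definition fps := nat -> F.
Definition fps_one : fps := fun k => (k == 0%N)%:R.
Definition fps_X : fps := fun k => (k == 1%N)%:R.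
Definition fps_mul (a b : fps) : fps :=
  fun k => \sum_(i < k.+1) a i * b (k - i)%N.
Definition fps_pow (a : fps) (n : nat) : fps := iter n (fps_mul a) fps_one.
(* composition f(g(z)), meaningful when g 0 = 0 *)
Definition fps_comp (f g : fps) : fps :=
  fun k => \sum_(n < k.+1) f n * fps_pow g n k.
Definition fps_comp_inverse (f g : fps) : Prop :=
  [/\ g 0%N = 0, fps_comp f g = fps_X & fps_comp g f = fps_X].
End FPS.

(* Main.v *)
Require Import Defs.
From HB Require Import structures.
Set Warnings "-notation-overridden,-ambiguous-paths".
From mathcomp Require Import all_boot all_order all_algebra.
From mathcomp Require Import zify.
Import GRing.Theory.
Local Open Scope ring_scope.

Lemma coef_dpsi (F : fieldType) (psi : nat -> F) (d : {poly F}) i :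
  (dpsi psi d)`_i = npsi psi i.+1 * d`_i.+1.
Proof.
rewrite /dpsi coef_poly; case: ltnP => // h.
by rewrite nth_default ?mulr0 //; move: h; case: (size d) => //=; lia.
Qed.

Lemma coef_iter_dpsi (F : fieldType) (psi : nat -> F)
  (psi_nz : forall n, psi n != 0) (d : {poly F}) n i :
  (iter n (dpsi psi) d)`_i = psi i / psi (i + n)%N * d`_(i + n).
Proof.
elim: n i => [|n IH] i /=.
  by rewrite addn0 divff ?mul1r.
rewrite coef_dpsi IH /npsi addSnnS mulrA; congr (_ * _).
by rewrite mulrA -(mulrA (psi i)) mulVf // mulr1.
Qed.

Lemma fps_pow_hi (F : fieldType) (g : fps F) : g 0%N = 0 ->
  forall m k, (k < m)%N -> fps_pow g m k = 0.
Proof.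
move=> g0; elim=> [|m IH] k //= hk.
rewrite /fps_mul big1 // => [[i hi]] _ /=.
case: i hi => [|i] hi; first by rewrite g0 mul0r.
by rewrite IH ?mulr0 //; rewrite ltnS in hk; lia.
Qed.

Lemma fps_powE (F : fieldType) (g : fps F) K n k : (k < K)%N ->
  fps_pow g n k = ((\poly_(i < K) g i) ^+ n)`_k.
Proof.
elim: n k => [|n IH] k hk /=.
  by rewrite expr0 coef1.
rewrite exprS coefM /fps_mul; apply: eq_bigr => [[i hi]] _ /=.
rewrite coef_poly IH; last by lia.
by rewrite ifT //; lia.
Qed.
Lemma comp_wide (F : fieldType) (qq g : fps F) : g 0%N = 0 ->
  forall N j, (j < N)%N -> \sum_(n < N) qq n * fps_pow g n j = fps_comp qq g j.
Proof.
move=> g0 N j hj; rewrite -(subnKC hj); elim: (N - j.+1)%N => [|d IH].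
  by rewrite addn0.
rewrite addnS big_ord_recr IH (@fps_pow_hi _ g g0) ?mulr0; last by rewrite /=; lia.
by rewrite /= addr0.
Qed.

Lemma sum1_ord (F : fieldType) (f : nat -> F) k : f 0%N = 0 ->
 \sum_(1 <= n < k.+2) f n = \sum_(n < k.+2) f n.
Proof.
move=> f0. by rewrite big_add1 /= big_mkord [RHS]big_ord_recl f0 add0r.
Qed.

Lemma B4 (F : fieldType) (qq g : fps F) : g 0%N = 0 -> qq 0%N = 0 ->
  fps_comp qq g = fps_X F -> forall k m,
  \sum_(1 <= n < k.+2) qq n * fps_pow g (m + n) k.+1 = fps_pow g m k.
Proof.
move=> g0 q0 comp k m.
set G := \poly_(i < k.+2) g i.
set H := \sum_(n < k.+2) qq n *: G ^+ n.
have HX : forall j, (j < k.+2)%N -> H`_j = 'X`_j.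
  move=> j hj; rewrite coef_sum.
  rewrite (eq_bigr (fun n : 'I_k.+2 => qq n * fps_pow g n j)); last first.
    by move=> n _; rewrite coefZ (fps_powE _ g _ n _ hj).
  by rewrite comp_wide // comp coefX.
rewrite sum1_ord; last by rewrite q0 mul0r.
have -> : \sum_(n < k.+2) qq n * fps_pow g (m + n) k.+1 = (G ^+ m * H)`_k.+1.
  rewrite mulr_sumr coef_sum; apply: eq_bigr => n _.
  by rewrite -scalerAr coefZ -exprD (fps_powE _ g _ _ _ (ltnSn k.+1)).
have -> : (G ^+ m * H)`_k.+1 = (G ^+ m * 'X)`_k.+1.
  rewrite !coefM; apply: eq_bigr => i _; rewrite HX //; lia.
by rewrite coefMX /= (fps_powE _ g _ _ _ (ltnW (ltnSn k.+1))).
Qed.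
From mathcomp Require Import ring.

Theorem mainTheorem7 (F : fieldType) (psi : nat -> F)
  (charF : [pchar F] =i pred0)
  (psi0 : psi 0%N = 1) (psi_nz : forall n, psi n != 0)
  (Q : {linear {poly F} -> {poly F}}) (qs : nat -> F)
  (Qdelta : is_psi_delta psi Q)
  (Qexp : forall p : {poly F},
     Q p = \sum_(1 <= n < size p) (qs n / nfact psi n) *: iter n (dpsi psi) p)
  (p : nat -> {poly F}) (pbasic : is_psi_basic psi Q p)
  (qinv : fps F)
  (qinv_inv : fps_comp_inverse
     (fun n => if n is 0%N then 0 else qs n / nfact psi n) qinv) :
  forall k : nat,
    (nfact psi k)^-1 *: p k =
    \sum_(n < k.+1) (fps_pow qinv n k / nfact psi n) *: 'X^n.
Proof.
case: pbasic => psz p0 pz pQ.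
case: Qdelta => _ [c [cnz QX]].
case: qinv_inv => g0 comp _.
pose cc n := qs n / nfact psi n.
have c1nz : cc 1%N != 0.
  apply/negP => /eqP c0; move: QX; rewrite Qexp size_polyX big_nat1.
  rewrite -/(cc 1%N) c0 scale0r => /esym /eqP; rewrite polyC_eq0.
  by rewrite (negbTE cnz).
pose a k m := psi k * (p k)`_m / psi m.
pose b k m := fps_pow qinv m k.
have A4 : forall k m, \sum_(1 <= n < k.+2) cc n * a k.+1 (m + n)%N = a k m.
  move=> k m; move: (pQ k.+1) => /(congr1 (fun r : {poly F} => r`_m)).
  rewrite Qexp psz coef_sum coefZ /= => E.
  have -> : a k m = psi k.+1 * (psi k / psi k.+1 * (p k)`_m) / psi m.
    rewrite /a /npsi /=; have := psi_nz m; have := psi_nz k.+1.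
    by move=> h1 h2; field; rewrite h1 h2.
  rewrite -E mulr_sumr mulr_suml; apply: eq_bigr => n _.
  rewrite coefZ coef_iter_dpsi //.
  have := psi_nz (m + n)%N; have := psi_nz m; have := psi_nz k.+1.
  by move=> *; rewrite /cc /a; field; rewrite /nfact !psi_nz invr_eq0 psi_nz.
pose qq : fps F := fun n => if n is 0%N then 0 else qs n / nfact psi n.
have claim : forall k m, a k m = b k m.
  elim=> [|k IH] m.
    rewrite /a /b p0 coef1; case: m => [|m].
      by rewrite /= psi0 !mul1r invr1.
    by rewrite mulr0 mul0r (@fps_pow_hi _ qinv g0).
  pose d m := a k.+1 m - b k.+1 m.
  have d0 : d 0%N = 0.
    rewrite /d /a /b -horner_coef0 pz // mulr0 mul0r.
    by rewrite /= /fps_one /= subr0.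
  have dhi : forall m, (k.+1 < m)%N -> d m = 0.
    move=> m' hm; rewrite /d /a /b (@fps_pow_hi _ qinv g0) // nth_default ?psz //.
    by rewrite mulr0 mul0r subr0.
  have deq : forall m, \sum_(1 <= n < k.+2) cc n * d (m + n)%N = 0.
    move=> m'; rewrite /d.
    rewrite (eq_bigr (fun n => cc n * a k.+1 (m' + n)%N - cc n * b k.+1 (m' + n)%N)); last first.
      by move=> n _; rewrite mulrBr.
    rewrite sumrB A4 IH /b.
    rewrite (eq_big_nat _ _ (F2 := fun n => qq n * fps_pow qinv (m' + n) k.+1)); last first.
      by case.
    by rewrite (@B4 _ qq qinv g0) ?subrr.
  have down : forall i m, (k.+1 < m + i)%N -> (0 < m)%N -> d m = 0.
    elim=> [|i IHi] m' h1 h2; first by apply: dhi; rewrite addn0 in h1.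
    case: (ltnP k.+1 (m' + i)) => h3; first exact: IHi.
    have := deq m'.-1.
    rewrite big_ltn // big_nat_cond big1 ?addr0; last first.
      move=> n /andP[/andP[n1 n2] _]; rewrite IHi ?mulr0 //; lia.
    rewrite addn1 prednK // => /eqP; rewrite mulf_eq0 (negbTE c1nz) /=.
    by move/eqP.
  apply/eqP; rewrite -subr_eq0; apply/eqP.
  case: m => [|m]; first exact: d0.
  by apply: (down k.+2) => //; lia.
move=> k; apply/polyP => m.
rewrite coefZ coef_sum.
case: (ltnP m k.+1) => hm.
  rewrite (bigD1 (Ordinal hm)) //= coefZ coefXn eqxx mulr1 big1 ?addr0; last first.
    move=> [j hj] /= hne; have hjm : (m == j) = false.
      by apply/negbTE; apply: contra hne => /eqP e; apply/eqP; apply: val_inj; rewrite /= e.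
    rewrite coefZ coefXn hjm.
    by rewrite mulr0.
  have := claim k m; rewrite /a /b /nfact invrK => <-.
  by rewrite invrK; field.
rewrite nth_default ?psz // mulr0 big1 // => [[j hj]] _.
rewrite coefZ coefXn /=.
have -> : (m == j) = false by apply/negbTE; rewrite neq_ltn; apply/orP; right; lia.
by rewrite mulr0.
Qed.
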